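(* The unitality, associativity and symmetry isomorphisms of the cartesian product on $E\mathcal M\text{-}\mathbf{SSet}$ restrict to isomorphisms for the box product $\boxtimes$ on $E\mathcal M\text{-}\mathbf{SSet}^\mu$ (e.g.\ $(X\times Y)\times Z\cong X\times(Y\times Z)$ restricts to an isomorphism $(X\boxtimes Y)\boxtimes Z\cong X\boxtimes(Y\boxtimes Z)$). This makes $E\mathcal M\text{-}\mathbf{SSet}^\mu$ a simplicial symmetric monoidal category with tensor product $\boxtimes$ and unit the terminal $E\mathcal M$-simplicial set.
   Context: $\omega=\{1,2,\dots\}$, $\mathcal M$ the monoid of injections $\omega\to\omega$, $\mathcal M_A$ those fixing $A\subset\omega$ pointwise; $A$ co-infinite if $\omega\setminus A$ is infinite. $E\mathcal M$ is the simplicial monoid with $(E\mathcal M)_n=\mathcal M^{1+n}$, pointwise multiplication, structure maps by precomposition. $E\mathcal M\text{-}\mathbf{SSet}$ is the category of simplicial sets with left $E\mathcal M$-action. $x\in X_n$ is $k$-supported on $A$ if $i_k(u).x=x$ for all $u\in\mathcal M_A$ ($i_k$ inclusion of the $(1+k)$-th factor). $X$ is mild if every $x\in X_n$ is, for each $0\le k\le n$, $k$-supported on some co-infinite set; $E\mathcal M\text{-}\mathbf{SSet}^\mu$ is the full subcategory of mild objects. The box product $X\boxtimes Y\subset X\times Y$ of mild $X,Y$ consists in degree $n$ of all $(x,y)$ such that for every $k$ there are disjoint $A_k,B_k\subset\omega$ with $A_k\cup B_k$ co-infinite, $x$ $k$-supported on $A_k$, $y$ $k$-supported on $B_k$; it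 is a mild $E\mathcal M$-simplicial subset of $X\times Y$ and functorial in $X,Y$. *)

(* Defs.v *)
From mathcomp Require Import all_boot.
Set Implicit Arguments. Unset Strict Implicit. Unset Printing Implicit Defensive.

Definition monotoneD (m n : nat) (f : 'I_m.+1 -> 'I_n.+1) : Prop :=
  forall i j : 'I_m.+1, i <= j -> f i <= f j.
Definition Dhom (m n : nat) := {f : 'I_m.+1 -> 'I_n.+1 | monotoneD f}.

Lemma monotoneD_id n : monotoneD (fun i : 'I_n.+1 => i).
Proof. by []. Qed.
Definition Did n : Dhom n n := exist _ _ (@monotoneD_id n).

Lemma monotoneD_comp m n p (g : Dhom n p) (f : Dhom m n) :
  monotoneD (fun i => proj1_sig g (proj1_sig f i)).
Proof. by move=> i j hij; apply: (proj2_sig g); apply: (proj2_sig f). Qed.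
Definition Dcomp m n p (g : Dhom n p) (f : Dhom m n) : Dhom m p :=
  exist _ _ (monotoneD_comp g f).

(* omega = {1,2,...} is modelled by nat = {0,1,...} (a relabelling). *)
Record Inj := MkInj { injf :> nat -> nat ; injP : injective injf }.

Definition inj_id : Inj := @MkInj id (fun x y h => h).
Lemma inj_comp_inj (u v : Inj) : injective (fun x => u (v x)).
Proof. move=> x y h; apply: (@injP v); apply: (@injP u); exact: h. Qed.
Definition inj_mul (u v : Inj) : Inj := MkInj (@inj_comp_inj u v).

Definition fixes (A : nat -> Prop) (u : Inj) : Prop := forall a, A a -> u a = a.

Definition coinfinite (A : nat -> Prop) : Prop := forall N, exists m, N <= m /\ ~ A m.

(* (EM)_n = M^{1+n}, elements are functions 'I_n.+1 -> Inj, multiplied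
   pointwise; structure maps are precomposition. *)
Record EMSSet := {
  obj :> nat -> Type;
  smap : forall m n, Dhom m n -> obj n -> obj m;
  smap_id : forall n (x : obj n), smap (Did n) x = x;
  smap_comp : forall m n p (g : Dhom n p) (f : Dhom m n) (x : obj p),
      smap (Dcomp g f) x = smap f (smap g x);
  act : forall n, ('I_n.+1 -> Inj) -> obj n -> obj n;
  act_one : forall n (x : obj n), act (fun _ => inj_id) x = x;
  act_mul : forall n (u v : 'I_n.+1 -> Inj) (x : obj n),
      act (fun i => inj_mul (u i) (v i)) x = act u (act v x);
  act_nat : forall m n (f : Dhom m n) (u : 'I_n.+1 -> Inj) (x : obj n),
      smap f (act u x) = act (fun i => u (proj1_sig f i)) (smap f x)
}.

Definition incl n (k : 'I_n.+1) (u : Inj) : 'I_n.+1 -> Inj :=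
  fun i => if i == k then u else inj_id.

Definition ksupported (X : EMSSet) n (x : X n) (k : 'I_n.+1) (A : nat -> Prop) : Prop :=
  forall u : Inj, fixes A u -> act (incl k u) x = x.

Definition mild (X : EMSSet) : Prop :=
  forall n (x : X n) (k : 'I_n.+1), exists A, coinfinite A /\ ksupported x k A.

Section Prod.
Variables X Y : EMSSet.
Definition pobj n := (X n * Y n)%type.
Definition psmap m n (f : Dhom m n) (p : pobj n) : pobj m :=
  (smap f p.1, smap f p.2).
Definition pact n (u : 'I_n.+1 -> Inj) (p : pobj n) : pobj n :=
  (act u p.1, act u p.2).
Lemma psmap_id n (p : pobj n) : psmap (Did n) p = p.
Proof. by case: p => x y; rewrite /psmap /= !smap_id. Qed.
Lemma psmap_comp m n p (g : Dhom n p) (f : Dhom m n) (q : pobj p) :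
  psmap (Dcomp g f) q = psmap f (psmap g q).
Proof. by rewrite /psmap /= !smap_comp. Qed.
Lemma pact_one n (p : pobj n) : pact (fun _ => inj_id) p = p.
Proof. by case: p => x y; rewrite /pact /= !act_one. Qed.
Lemma pact_mul n (u v : 'I_n.+1 -> Inj) (p : pobj n) :
  pact (fun i => inj_mul (u i) (v i)) p = pact u (pact v p).
Proof. by rewrite /pact /= !act_mul. Qed.
Lemma pact_nat m n (f : Dhom m n) (u : 'I_n.+1 -> Inj) (p : pobj n) :
  psmap f (pact u p) = pact (fun i => u (proj1_sig f i)) (psmap f p).
Proof. by rewrite /pact /psmap /= !act_nat. Qed.
Definition prodEM : EMSSet :=
  Build_EMSSet psmap_id psmap_comp pact_one pact_mul pact_nat.
End Prod.

Definition terminalEM : EMSSet :=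
  @Build_EMSSet (fun _ => unit) (fun _ _ _ _ => tt)
    (fun _ x => match x with tt => erefl end)
    (fun _ _ _ _ _ _ => erefl)
    (fun _ _ x => x)
    (fun _ x => erefl) (fun _ _ _ _ => erefl) (fun _ _ _ _ _ => erefl).

(* boxed X Y n p : the pair p = (x,y) in (X x Y)_n lies in (X [box] Y)_n.
   The E M-simplicial structure of X [box] Y is the one restricted from
   the cartesian product prodEM X Y. *)
Definition boxed (X Y : EMSSet) n (p : prodEM X Y n) : Prop :=
  forall k : 'I_n.+1, exists A B : nat -> Prop,
    (forall a, ~ (A a /\ B a)) /\ coinfinite (fun a => A a \/ B a) /\
    ksupported (X := X) p.1 k A /\ ksupported (X := Y) p.2 k B.

Definition assoc_map (X Y Z : EMSSet) n
  (p : prodEM (prodEM X Y) Z n) : prodEM X (prodEM Y Z) n :=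
  (p.1.1, (p.1.2, p.2)).
Definition lunit_map (X : EMSSet) n (p : prodEM terminalEM X n) : X n := p.2.
Definition runit_map (X : EMSSet) n (p : prodEM X terminalEM n) : X n := p.1.
Definition sym_map (X Y : EMSSet) n (p : prodEM X Y n) : prodEM Y X n :=
  (p.2, p.1).

(* Main.v *)
From Stdlib Require Import ClassicalEpsilon FunctionalExtensionality ProofIrrelevance Classical.
Require Import Defs.
From mathcomp Require Import all_boot.
Set Implicit Arguments. Unset Strict Implicit. Unset Printing Implicit Defensive.

Definition infinite (P : nat -> Prop) := forall N, exists m, N <= m /\ P m.

Definition nxt (P : nat -> Prop) (k : nat) : nat :=
  epsilon (inhabits 0) (fun m => k <= m /\ P m).

Lemma nxtP P k : infinite P -> k <= nxt P k /\ P (nxt P k).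
Proof. move=> hP; exact: (epsilon_spec (inhabits 0) (fun m => k <= m /\ P m) (hP k)). Qed.

Fixpoint gseq (F : nat -> nat -> Prop) (i : nat) : nat :=
  nxt (F i) (match i with 0 => 0 | j.+1 => (gseq F j).+1 end).

Section G.
Variable F : nat -> nat -> Prop.
Hypothesis hF : forall i, infinite (F i).
Lemma gseqP i : F i (gseq F i).
Proof. case: i => [|i] /=; exact: (nxtP _ (hF _)).2. Qed.
Lemma gseqS i : gseq F i < gseq F i.+1.
Proof. rewrite [gseq F i.+1]/=; exact: (nxtP _ (hF _)).1. Qed.
Lemma gseq_lt i j : i < j -> gseq F i < gseq F j.
Proof.
elim: j => [|j IH] //; rewrite ltnS leq_eqVlt => /orP [/eqP -> | /IH h].
  exact: gseqS.
exact: ltn_trans h (gseqS j).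
Qed.
Lemma gseq_inj : injective (gseq F).
Proof.
move=> i j h; case: (ltngtP i j) => // hij.
  by have := gseq_lt hij; rewrite h ltnn.
by have := gseq_lt hij; rewrite h ltnn.
Qed.
End G.

Lemma inj_eq (u v : Inj) : (forall n, u n = v n) -> u = v.
Proof.
case: u => f hf; case: v => g hg /= h.
have e : f = g by apply: functional_extensionality.
subst g; f_equal; apply: proof_irrelevance.
Qed.

Lemma inf_img (S : nat -> Prop) (t : nat -> nat) : infinite S -> injective t ->
  infinite (fun m => exists n, S n /\ t n = m).
Proof.
move=> hS ht N; apply: NNPP => hno.
have hlt : forall n, S n -> t n < N.
  move=> n Sn; rewrite ltnNge; apply/negP => hle; apply: hno.
  by exists (t n); split=> //; exists n.
pose c := gseq (fun _ : nat => S).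
have cS : forall i, S (c i) := gseqP (fun _ => hS).
have cinj : injective c := gseq_inj (fun _ => hS).
have := @uniq_leq_size _ (map (t \o c) (iota 0 N.+1)) (iota 0 N).
rewrite map_inj_uniq ?iota_uniq; last by move=> i j /= /ht /cinj.
rewrite size_map !size_iota ltnn => h; suff : false by [].
apply: h => // m /mapP [i _ ->] /=; rewrite mem_iota /= add0n; exact: hlt.
Qed.

Definition pw (A : nat -> Prop) (f g : nat -> nat) (n : nat) : nat :=
  match excluded_middle_informative (A n) with left _ => f n | right _ => g n end.
Lemma pwT A f g n : A n -> pw A f g n = f n.
Proof. by rewrite /pw; case: excluded_middle_informative. Qed.
Lemma pwF A f g n : ~ A n -> pw A f g n = g n.
Proof. by rewrite /pw; case: excluded_middle_informative. Qed.
Lemma pw_inj (D A : nat -> Prop) f g :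
  (forall n m, D n -> D m -> A n -> A m -> f n = f m -> n = m) ->
  (forall n m, D n -> D m -> ~ A n -> ~ A m -> g n = g m -> n = m) ->
  (forall n m, D n -> D m -> A n -> ~ A m -> f n <> g m) ->
  forall n m, D n -> D m -> pw A f g n = pw A f g m -> n = m.
Proof.
move=> hf hg hfg n m Dn Dm.
case: (classic (A n)) => An; case: (classic (A m)) => Am;
  rewrite ?(pwT _ _ An) ?(pwF _ _ An) ?(pwT _ _ Am) ?(pwF _ _ Am).
- exact: hf.
- by move=> e; exfalso; exact: (hfg n m).
- by move=> e; exfalso; apply: (hfg m n) => //.
- exact: hg.
Qed.
Section Abs.
Variables (T : Type) (a : Inj -> T -> T).
Hypothesis a_id : forall y, a Defs.inj_id y = y.
Hypothesis a_mul : forall u w y, a (inj_mul u w) y = a u (a w y).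
Variable x : T.
Definition supp (A : nat -> Prop) := forall w, fixes A w -> a w x = x.

Lemma supp_pre A (s t : Inj) : supp A -> (forall n, A n -> s n = t n) ->
  (forall n, ~ A n -> exists m, ~ A m /\ t m = s n) -> a s x = a t x.
Proof.
move=> hA hst him.
pose w (n : nat) := match excluded_middle_informative (A n) with
  | left _ => n | right _ => epsilon (inhabits 0) (fun m => ~ A m /\ t m = s n) end.
have tw : forall n, t (w n) = s n.
  move=> n; rewrite /w; case: excluded_middle_informative => h.
  - by rewrite hst.
  - by have [] := epsilon_spec (inhabits 0) _ (him n h).
have winj : injective w.
  by move=> n m e; apply: (@injP s); rewrite -!tw e.
pose W := MkInj winj.
have -> : s = inj_mul t W by apply: inj_eq => n /=; rewrite tw.
rewrite a_mul hA // => n An; rewrite /= /w; case: excluded_middle_informative => //.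
Qed.

Lemma notP_e (t : nat -> nat) (A : nat -> Prop) (f : nat -> nat) (e : nat -> nat) : True.
Proof. by []. Qed.

Lemma supp_agree A (t t' : Inj) : supp A -> coinfinite A ->
  (forall n, A n -> t n = t' n) -> a t x = a t' x.
Proof.
move=> hA iA htt.
pose P := fun m => exists n, ~ A n /\ t n = m.
pose Q := fun m => exists n, ~ A n /\ t' n = m.
have iP : infinite P := inf_img iA (@injP t).
have iQ : infinite Q := inf_img iA (@injP t').
pose F := fun i => if odd i then Q else P.
have iF : forall i, infinite (F i) by move=> i; rewrite /F; case: odd.
pose e := gseq F.
have eP : forall i, P (e i.*2).
  by move=> i; have := gseqP iF i.*2; rewrite /F odd_double.
have eQ : forall i, Q (e i.*2.+1).
  move=> i; have := gseqP iF i.*2.+1.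
  by rewrite /F; have -> : odd i.*2.+1 = true by rewrite /= odd_double.
have einj : injective e := gseq_inj iF.
have e2 : forall i j, e i.*2 <> e j.*2.+1.
  by move=> i j /einj /(congr1 odd); rewrite /= !odd_double.
pose c := gseq (fun _ => fun n => ~ A n).
have cA : forall i, ~ A (c i) := gseqP (fun _ => iA).
have cinj : injective c := gseq_inj (fun _ => iA).
have tP : forall n i, A n -> t n <> e i.*2.
  move=> n i An ei; have [j [Aj tj]] := eP i.
  by apply: Aj; have /injP -> : t j = t n by rewrite tj ei.
have tQ : forall n i, A n -> t' n <> e i.*2.+1.
  move=> n i An ei; have [j [Aj tj]] := eQ i.
  by apply: Aj; have /injP -> : t' j = t' n by rewrite tj ei.
pose A1 := fun n => exists i, n = c i.*2.
pose inner := pw A1 (fun n => e n.*2) (fun n => e n.*2.+1).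
have innj : injective inner.
  move=> n m; apply: (@pw_inj (fun _ => True)) => //.
  - by move=> ? ? _ _ _ _ /einj /double_inj.
  - by move=> ? ? _ _ _ _ /einj [] /double_inj.
have t2inj : injective (pw A t inner).
  move=> n m; apply: (@pw_inj (fun _ => True)) => //.
  - by move=> ? ? _ _ _ _ /injP.
  - by move=> n1 m1 _ _ _ _ /innj.
  - move=> n1 m1 _ _ An1 _; case: (classic (A1 m1)) => h.
    + by rewrite /inner pwT //; apply: tP.
    + by rewrite /inner pwF // htt //; apply: tQ.
pose t2 := MkInj t2inj.
have s1inj : injective (pw A t (fun n => e (c n.*2).*2)).
  move=> n m; apply: (@pw_inj (fun _ => True)) => //.
  - by move=> ? ? _ _ _ _ /injP.
  - by move=> ? ? _ _ _ _ /einj /double_inj /cinj /double_inj.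
  - by move=> ? ? _ _ An _; apply: tP.
pose s1 := MkInj s1inj.
have s2inj : injective (pw A t' (fun n => e (c n.*2.+1).*2.+1)).
  move=> n m; apply: (@pw_inj (fun _ => True)) => //.
  - by move=> ? ? _ _ _ _ /injP.
  - by move=> ? ? _ _ _ _ /einj [] /double_inj /cinj [] /double_inj.
  - by move=> ? ? _ _ An _; apply: tQ.
pose s2 := MkInj s2inj.
have E1 : a s1 x = a t x.
  apply: (@supp_pre A) => // n An; first by rewrite /s1 /s2 /t2 /= pwT.
  by rewrite /s1 /s2 /t2 /= pwF //; apply: eP.
have E2 : a s1 x = a t2 x.
  apply: (@supp_pre A) => // n An; first by rewrite /s1 /s2 /t2 /= !pwT.
  exists (c n.*2); split => //.
  by rewrite /s1 /s2 /t2 /= !pwF // /inner pwT //; exists n.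
have E3 : a s2 x = a t' x.
  apply: (@supp_pre A) => // n An; first by rewrite /s1 /s2 /t2 /= pwT.
  by rewrite /s1 /s2 /t2 /= pwF //; apply: eQ.
have E4 : a s2 x = a t2 x.
  apply: (@supp_pre A) => // n An; first by rewrite /s1 /s2 /t2 /= !pwT // htt.
  exists (c n.*2.+1); split => //.
  rewrite /s1 /s2 /t2 /= !pwF // /inner pwF // => [[i /cinj /(congr1 odd)]].
  by rewrite /s1 /s2 /t2 /= !odd_double.
by rewrite -E1 E2 -E4 E3.
Qed.

Lemma supp_int A B (u : Inj) : supp A -> supp B -> coinfinite A -> coinfinite B ->
  fixes (fun n => A n /\ B n) u -> a u x = x.
Proof.
move=> hA hB iA iB hu.
pose P := fun m => ~ A m.
pose Q := fun m => exists n, ~ B n /\ u n = m.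
have iQ : infinite Q := inf_img iB (@injP u).
pose F := fun i => if odd i then Q else P.
have iF : forall i, infinite (F i) by move=> i; rewrite /F; case: odd.
pose e := gseq F.
have eP : forall i, ~ A (e i.*2).
  by move=> i; have := gseqP iF i.*2; rewrite /F odd_double.
have eQ : forall i, Q (e i.*2.+1).
  move=> i; have := gseqP iF i.*2.+1.
  by rewrite /F; have -> : odd i.*2.+1 = true by rewrite /= odd_double.
have einj : injective e := gseq_inj iF.
have e2 : forall i j, e i.*2 <> e j.*2.+1.
  by move=> i j /einj /(congr1 odd); rewrite /= !odd_double.
have v1inj : injective (pw B u (fun n => e n.*2.+1)).
  move=> n m; apply: (@pw_inj (fun _ => True)) => //.
  - by move=> ? ? _ _ _ _ /injP.
  - by move=> ? ? _ _ _ _ /einj [] /double_inj.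
  - move=> n1 m1 _ _ Bn1 _ /= h; have [j [Bj uj]] := eQ m1.
    by apply: Bj; have /injP -> : u j = u n1 by rewrite uj h.
pose v1 := MkInj v1inj.
pose inner := pw B id (fun n => e n.*2.+1).
have v2inj : injective (pw A inner (fun n => e n.*2)).
  move=> n m; apply: (@pw_inj (fun _ => True)) => //.
  - move=> n1 m1 _ _ An1 Am1; apply: (@pw_inj A) => //.
    + by move=> ? ? _ _ _ _ /einj [] /double_inj.
    + move=> n2 m2 An2 _ Bn2 _ /= h; have [j [Bj uj]] := eQ m2.
      apply: Bj; have /injP -> : u j = u n2 by rewrite uj -h hu.
      done.
  - by move=> ? ? _ _ _ _ /einj /double_inj.
  - move=> n1 m1 _ _ An1 Am1; case: (classic (B n1)) => h.
    + by rewrite /inner pwT // => /= e1; apply: (eP m1); rewrite -e1.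
    + by rewrite /inner pwF // => /= e1; apply: (e2 m1 n1).
pose v2 := MkInj v2inj.
have v3inj : injective (pw A id (fun n => e n.*2)).
  move=> n m; apply: (@pw_inj (fun _ => True)) => //.
  - by move=> ? ? _ _ _ _ /einj /double_inj.
  - by move=> n1 m1 _ _ An1 _ /= e1; apply: (eP m1); rewrite -e1.
pose v3 := MkInj v3inj.
have E1 : a u x = a v1 x.
  by apply: (@supp_agree B) => // n Bn; rewrite /v1 /= pwT.
have E2 : a v1 x = a v2 x.
  apply: (@supp_agree A) => // n An; rewrite /v1 /v2 /= [pw A _ _ n]pwT // /inner.
  case: (classic (B n)) => h; first by rewrite !pwT // (hu n (conj An h)).
  by rewrite !pwF.
have E3 : a v2 x = a v3 x.
  apply: (@supp_agree B) => // n Bn; rewrite /v3 /v2 /inner /=.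
  case: (classic (A n)) => h; first by rewrite !pwT.
  by rewrite !pwF.
have E4 : a v3 x = a Defs.inj_id x.
  by apply: (@supp_agree A) => // n An; rewrite /v3 /= pwT.
by rewrite E1 E2 E3 E4 a_id.
Qed.
End Abs.

Section EM.
Variables (X : EMSSet) (n : nat) (k : 'I_n.+1).
Definition kact (u : Inj) (y : X n) : X n := act (incl k u) y.
Lemma kact_id y : kact Defs.inj_id y = y.
Proof.
rewrite /kact; have -> : incl k Defs.inj_id = fun _ => Defs.inj_id.
  by apply: functional_extensionality => i; rewrite /incl; case: (i == k).
exact: act_one.
Qed.
Lemma kact_mul u w y : kact (inj_mul u w) y = kact u (kact w y).
Proof.
rewrite /kact -act_mul; congr act; apply: functional_extensionality => i.
rewrite /incl; case: (i == k) => //; exact: inj_eq.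
Qed.
End EM.

Lemma coinf_sub (A B : nat -> Prop) : coinfinite A -> (forall a, B a -> A a) -> coinfinite B.
Proof. move=> h s N; have [m [hm nA]] := h N; exists m; split => // /s; exact: nA. Qed.

Lemma ks_int (X : EMSSet) n (x : X n) k A B : ksupported x k A -> ksupported x k B ->
  coinfinite A -> coinfinite B -> ksupported x k (fun a => A a /\ B a).
Proof.
move=> hA hB cA cB u hu.
exact: (@supp_int _ (@kact X n k) (@kact_id X n k) (@kact_mul X n k) x A B u hA hB cA cB hu).
Qed.

Lemma ks_sup (X : EMSSet) n (x : X n) k (A A' : nat -> Prop) : ksupported x k A ->
  (forall a, A a -> A' a) -> ksupported x k A'.
Proof. move=> h s u hu; apply: h => a Aa; exact: hu (s a Aa). Qed.

Lemma ks_pair (X Y : EMSSet) n (p : prodEM X Y n) k A :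
  ksupported p k A <-> ksupported (X := X) p.1 k A /\ ksupported (X := Y) p.2 k A.
Proof.
case: p => x y; split.
- move=> h; split => u hu; have := h u hu; rewrite /= /pact /= => -[] //.
- move=> [h1 h2] u hu; rewrite /= /pact /= h1 // h2 //.
Qed.

Lemma ks_term n (p : terminalEM n) k A : ksupported p k A.
Proof. by []. Qed.

Theorem proposition2p18 :
  forall X Y Z : EMSSet, mild X -> mild Y -> mild Z ->
  (forall n (p : prodEM (prodEM X Y) Z n),
      (boxed p.1 /\ boxed p) <->
      (boxed (assoc_map p).2 /\ boxed (assoc_map p))) /\
  (forall n (x : X n), exists p : prodEM terminalEM X n,
      boxed p /\ lunit_map p = x) /\
  (forall n (p : prodEM terminalEM X n), boxed p) /\
  (forall n (x : X n), exists p : prodEM X terminalEM n,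
      boxed p /\ runit_map p = x) /\
  (forall n (p : prodEM X terminalEM n), boxed p) /\
  (forall n (p : prodEM X Y n), boxed p <-> boxed (sym_map p)).
Proof.
move=> X Y Z mX mY mZ.
have lu : forall n (p : prodEM terminalEM X n), boxed p.
  move=> n p k; have [S [cS sS]] := mX n p.2 k.
  exists (fun _ => False), S; split; first by move=> a [].
  split; first by refine (coinf_sub cS _) => a [].
  by split => //; apply: ks_term.
have ru : forall n (p : prodEM X terminalEM n), boxed p.
  move=> n p k; have [S [cS sS]] := mX n p.1 k.
  exists S, (fun _ => False); split; first by move=> a [].
  split; first by refine (coinf_sub cS _) => a [].
  by split => //; apply: ks_term.
split; last split; last split; last split; last split.
- move=> n [[x y] z]; split.
  + move=> [h1 h2]; split.
    * move=> k; have [C [D [dCD [cCD [sC sD]]]]] := h2 k.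
      exists C, D; split => //; split => //; split => //.
      exact: (proj2 (proj1 (ks_pair _ _ _) sC)).
    * move=> k; have [A1 [B1 [d1 [c1 [sA1 sB1]]]]] := h1 k.
      have [C [D [dCD [cCD [sC sD]]]]] := h2 k.
      have [sCx sCy] := proj1 (ks_pair _ _ _) sC.
      have cA1 : coinfinite A1 by refine (coinf_sub c1 _) => a; left.
      have cB1 : coinfinite B1 by refine (coinf_sub c1 _) => a; right.
      have cC : coinfinite C by refine (coinf_sub cCD _) => a; left.
      exists (fun a => A1 a /\ C a), (fun a => (B1 a /\ C a) \/ D a).
      split; first by move=> a [[hA hC] [[hB _]|hD]]; [apply: (d1 a) | apply: (dCD a)].
      split; first by refine (coinf_sub cCD _) => a [[_ ?]|[[_ ?]|?]]; [left|left|right].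
      split; first exact: ks_int.
      apply/ks_pair; split.
      - by apply: ks_sup (ks_int sB1 sCy cB1 cC) _ => a; left.
      - by apply: ks_sup sD _ => a; right.
  + move=> [h1 h2]; split.
    * move=> k; have [A [E [dAE [cAE [sA sE]]]]] := h2 k.
      have [sEy sEz] := proj1 (ks_pair _ _ _) sE.
      by exists A, E.
    * move=> k; have [A [E [dAE [cAE [sA sE]]]]] := h2 k.
      have [sEy sEz] := proj1 (ks_pair _ _ _) sE.
      have [C [D [dCD [cCD [sC sD]]]]] := h1 k.
      have cE : coinfinite E by refine (coinf_sub cAE _) => a; right.
      have cC : coinfinite C by refine (coinf_sub cCD _) => a; left.
      have cD : coinfinite D by refine (coinf_sub cCD _) => a; right.
      exists (fun a => A a \/ (E a /\ C a)), (fun a => E a /\ D a).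
      split; first by move=> a [[hA|[hE hC]] [hE' hD]]; [apply: (dAE a) | apply: (dCD a)].
      split; first by refine (coinf_sub cAE _) => a [[?|[? _]]|[? _]]; [left|right|right].
      split; last exact: ks_int.
      apply/ks_pair; split.
      - by apply: ks_sup sA _ => a; left.
      - by apply: ks_sup (ks_int sEy sC cE cC) _ => a; right.
- move=> n x; exists (tt, x); split => //; exact: lu.
- exact: lu.
- move=> n x; exists (x, tt); split => //; exact: ru.
- exact: ru.
- move=> n [x y]; split => h k; have [A [B [d [c [s1 s2]]]]] := h k;
    exists B, A; (split; first by move=> a [? ?]; apply: (d a));
    (split; first by refine (coinf_sub c _) => a [?|?]; [right|left]); by [].
Qed.
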